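(* Let $\mu=\min\{\kappa : 2^{\kappa}$ is not selectively sequentially separable$\}$. Then $\mu=\min\{\mathfrak{b},\mathfrak{q}\}$.
   Context: $2^\kappa$ denotes the Cantor cube $\{0,1\}^\kappa$ with the product topology. A space $Z$ is selectively sequentially separable if for every sequence $(D_n:n\in\mathbb{N})$ of sequentially dense subsets of $Z$ (sets such that every point of $Z$ is a limit of a sequence from the set) one can choose finite $F_n\subseteq D_n$ so that $\bigcup_n F_n$ is sequentially dense in $Z$. $\mathfrak{b}$ is the least cardinality of a subset of $\mathbb{N}^{\mathbb{N}}$ unbounded with respect to $\leq^*$ ($f\leq^* g$ iff $f(n)\leq g(n)$ for all but finitely many $n$). A $Q$-set is a subset of $\mathbb{R}$ each of whose subsets is a $G_\delta$ in it; $\mathfrak{q}$ is the smallest cardinal such that for every $\kappa<\mathfrak{q}$ there is a $Q$-set of size $\kappa$. *)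

(* Defs.v *)
From HB Require Import structures.
From mathcomp Require Import all_boot all_order all_algebra.
From mathcomp Require Import all_classical all_reals all_analysis.
From mathcomp Require Import Rstruct Rstruct_topology.
From Stdlib Require Import Reals.

Set Implicit Arguments. Unset Strict Implicit. Unset Printing Implicit Defensive.
Local Open Scope classical_set_scope.

Definition seq_dense (Z : topologicalType) (D : set Z) : Prop :=
  forall z : Z, exists s : nat -> Z, (forall n, D (s n)) /\ (s @ \oo --> z).

Definition sel_seq_separable (Z : topologicalType) : Prop :=
  forall Ds : nat -> set Z, (forall n, seq_dense (Ds n)) ->
    exists Fs : nat -> set Z,
      (forall n, finite_set (Fs n) /\ Fs n `<=` Ds n) /\
      seq_dense (\bigcup_n Fs n).

(* the Cantor cube 2^K: {0,1}^K with the product topology (bool is discrete) *)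
Definition cantor_cube (K : Type) : topologicalType := {ptws K -> bool}.

Definition card_leq (L K : Type) : Prop := exists f : L -> K, injective f.

Definition le_star (f g : nat -> nat) : Prop :=
  exists N, forall n, (N <= n)%N -> (f n <= g n)%N.

(* |K| < b : every family of at most |K| functions (indexed by K) is <=*-bounded *)
Definition lt_bnum (K : Type) : Prop :=
  forall F : K -> (nat -> nat), exists g : nat -> nat, forall k, le_star (F k) g.

Definition Gdelta_in (A B : set R) : Prop :=
  exists U : nat -> set R, (forall n, open (U n)) /\ B = A `&` \bigcap_n U n.

Definition Qset (A : set R) : Prop := forall B, B `<=` A -> Gdelta_in A B.

(* |K| < q : there is a Q-set of cardinality |K| *)
Definition lt_qnum (K : Type) : Prop :=
  exists f : K -> R, injective f /\ Qset (range f).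

(* Main.v *)
Require Import Defs.
From Stdlib Require Import Reals.
From mathcomp Require Import all_boot all_order all_algebra all_classical all_reals all_analysis.
From mathcomp Require Import Rstruct Rstruct_topology.
From mathcomp Require Import lra.
Set Implicit Arguments. Unset Strict Implicit. Unset Printing Implicit Defensive.
Import Order.TTheory GRing.Theory Num.Theory.
Local Open Scope classical_set_scope.
Lemma ptws_cvgP (K : Type) (s : nat -> cantor_cube K) (z : cantor_cube K) :
  s @ \oo --> z <-> forall a, \forall n \near \oo, s n a = z a.
Proof.
split.
  move=> /cvg_sup H a.
  have := H a.
  move=> /(_ [set g : cantor_cube K | g a = z a]).
  apply.
  rewrite nbhsE /=. exists [set g : cantor_cube K | g a = z a] => //.
  split => //.
  exists [set z a] => //.
  exact: discrete_open.
move=> H; apply/cvg_sup => a A.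
rewrite nbhsE /= => -[B [[C Co <-] Cz] BA].
move: (H a); apply: filterS => n /= Hn.
apply: BA; rewrite /preimage /= Hn; exact: Cz.

Qed.
Local Open Scope ring_scope.
Definition rb (j : nat) : set R :=
  match @unpickle (rat * rat)%type j with
  | Some (q, r) => [set y : R | ratr q < y < ratr r]
  | None => set0 end.

Lemma rb_base (U : set R) (x : R) : open U -> U x -> exists j, rb j x /\ rb j `<=` U.
Proof.
move=> oU Ux.
have [e e0 He] := (nbhs_ballP x U).1 (oU x Ux).
have e0' : 0 < e by exact: e0.
have [q Hq] : exists q : rat, ratr q \in `]x - e, x[ by apply: rat_in_itvoo; lra.
have [r Hr] : exists q : rat, ratr q \in `]x, x + e[ by apply: rat_in_itvoo; lra.
move: Hq Hr; rewrite !in_itv /= => /andP[q1 q2] /andP[r1 r2].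
exists (pickle (q, r)); rewrite /rb pickleK; split.
  by rewrite /= q2 r1.
move=> y /= /andP[y1 y2]; apply: He; rewrite /ball /=.
rewrite ltr_distl; apply/andP; split; lra.
Qed.

Local Close Scope ring_scope.

Lemma choice1 (A B : Type) (P : A -> B -> Prop) :
  (forall a, exists b, P a b) -> exists f : A -> B, forall a, P a (f a).
Proof. by move=> H; exists (fun a => sval (cid (H a))) => a; exact: svalP. Qed.

Lemma choice2 (A B C : Type) (P : A -> B -> C -> Prop) :
  (forall a b, exists c, P a b c) -> exists f : A -> B -> C, forall a b, P a b (f a b).
Proof. by move=> H; exists (fun a b => sval (cid (H a b))) => a b; exact: svalP. Qed.

Lemma sss_of (L : Type) (E : nat -> cantor_cube L) :
  lt_bnum L ->
  (forall z : cantor_cube L, exists m : nat -> nat, (fun i => E (m i)) @ \oo --> z) ->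
  sel_seq_separable (cantor_cube L).
Proof.
move=> Hb HE Ds HD.
have [S HS] : exists S : nat -> nat -> nat -> cantor_cube L,
    forall n m, (forall j, Ds n (S n m j)) /\ S n m @ \oo --> E m.
  apply: (@choice2 _ _ _ (fun n m s => (forall j, Ds n (s j)) /\ s @ \oo --> E m)) => n m; exact: HD.
have [J HJ] : exists J : L -> nat -> nat -> nat,
    forall a n m j, (J a n m <= j)%N -> S n m j a = E m a.
  have H1 : forall a n, exists Ja : nat -> nat, forall m j, (Ja m <= j)%N -> S n m j a = E m a.
    move=> a n; apply: (@choice1 _ _ (fun m N => forall j, (N <= j)%N -> S n m j a = E m a)) => m.
    have [N _ HN] := (ptws_cvgP _ _).1 (HS n m).2 a.
    by exists N => j Hj; exact: HN.
  have [J HJ] := choice2 H1.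
  by exists J => a n m j; exact: HJ.
have [g Hg] := Hb (fun a n => \max_(m < n.+1) J a n m).
exists (fun n => [set S n m (g n) | m in `I_(n.+1)]).
split.
  move=> n; split; first exact/finite_image/finite_II.
  by move=> _ [m _ <-]; exact: (HS n m).1.
move=> z; have [m Hm] := HE z.
exists (fun i => S (i + m i) (m i) (g (i + m i))); split.
  move=> i; exists (i + m i) => //; exists (m i) => //=.
  by rewrite ltnS leq_addl.
apply/ptws_cvgP => a.
have [N1 _ HN1] := (ptws_cvgP _ _).1 Hm a.
have [N2 HN2] := Hg a.
exists (maxn N1 N2) => // i /= Hi.
rewrite HJ; first exact: HN1 (leq_trans (leq_maxl _ _) Hi).
have Hlt : (m i < (i + m i).+1)%N by rewrite ltnS leq_addl.
apply: leq_trans (HN2 _ _).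
  exact: (@leq_bigmax _ (fun k : 'I_(i + m i).+1 => J a (i + m i) k) (Ordinal Hlt)).
apply: leq_trans (leq_maxr N1 N2) _.
exact: leq_trans Hi (leq_addr _ _).
Qed.

Fixpoint cum (V : nat -> set R) (n : nat) : set R :=
  match n with 0 => V 0 | n'.+1 => cum V n' `&` V n'.+1 end.

Lemma cum_open V : (forall n, open (V n)) -> forall n, open (cum V n).
Proof. by move=> HV; elim=> [|n IH] //=; exact: openI. Qed.

Lemma cum_sub V n i : (i <= n)%N -> cum V n `<=` V i.
Proof.
elim: n => [|n IH] /=; first by rewrite leqn0 => /eqP ->.
rewrite leq_eqVlt => /orP[/eqP -> | Hi] x [Hx1 Hx2] //.
exact: IH.
Qed.

Lemma cum_all V x : (forall i, V i x) -> forall n, cum V n x.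
Proof. by move=> H; elim=> [|n IH] //=. Qed.

Definition U_of (l : seq nat) : set R := [set y | exists2 j, j \in l & rb j y].

Definition Eq (L : Type) (f : L -> R) (p : seq nat * seq nat) : cantor_cube L :=
  fun a => `[< U_of p.1 (f a) /\ ~ U_of p.2 (f a) >].

Definition Eenum (L : Type) (f : L -> R) (m : nat) : cantor_cube L :=
  match @unpickle (seq nat * seq nat)%type m with
  | Some p => Eq f p | None => fun _ => false end.

Lemma Gdelta_img (L : Type) (f : L -> R) (P : L -> Prop) :
  injective f -> Qset (range f) ->
  exists V : nat -> set R, (forall n, open (V n)) /\
    (forall a, P a -> forall n, V n (f a)) /\
    (forall a, ~ P a -> exists N, ~ V N (f a)).
Proof.
move=> finj Qf.
have sub : f @` P `<=` range f by move=> _ [a _ <-]; exists a.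
have [V [Vo HV]] := Qf (f @` P) sub.
exists V; split => //; split.
  move=> a Pa n.
  have : (f @` P) (f a) by exists a.
  by rewrite HV => -[_ /(_ n I)].
move=> a nPa; apply: contrapT => Hn.
have : (range f `&` \bigcap_n V n) (f a).
  split; first by exists a.
  move=> n _; apply: contrapT => Hv; apply: Hn; by exists n.
rewrite -HV => -[b Pb /finj Hb]; apply: nPa; by rewrite -Hb.
Qed.

Lemma seqsep (L : Type) : lt_bnum L -> lt_qnum L ->
  exists E : nat -> cantor_cube L,
  forall z : cantor_cube L, exists m : nat -> nat, (fun i => E (m i)) @ \oo --> z.
Proof.
move=> Hb [f [finj Qf]]; exists (Eenum f) => z.
have [V [Vo [V1 V2]]] := Gdelta_img (fun a => is_true (z a)) finj Qf.
have [W [Wo [W1 W2]]] := Gdelta_img (fun a => is_true (~~ z a)) finj Qf.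
have [h Hh] : exists h : L -> nat -> nat, forall a n,
    rb (h a n) (f a) /\ rb (h a n) `<=` (if z a then cum V n else cum W n).
  apply: (@choice2 _ _ _ (fun a n j => rb j (f a) /\
     rb j `<=` (if z a then cum V n else cum W n))) => a n.
  apply: rb_base.
    by case: (z a); exact: cum_open.
  case Hza: (z a); apply: cum_all.
    by move=> i; apply: V1; rewrite Hza.
  by move=> i; apply: W1; rewrite Hza.
have [g Hg] := Hb h.
pose l1 n := [seq j <- iota 0 (g n).+1 | `[< rb j `<=` cum V n >]].
pose l2 n := [seq j <- iota 0 (g n).+1 | `[< rb j `<=` cum W n >]].
exists (fun n => pickle (l1 n, l2 n)).
apply/ptws_cvgP => a.
case Hza: (z a).
  have [N HN] : exists N, ~ W N (f a) by apply: W2; rewrite Hza.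
  have [N2 HN2] := Hg a.
  exists (maxn N N2) => // n /= Hn.
  rewrite /Eenum pickleK /Eq /=; apply/asboolP; split.
    exists (h a n); last exact: (Hh a n).1.
    rewrite mem_filter mem_iota /= add0n ltnS HN2; last first.
      exact: leq_trans (leq_maxr _ _) Hn.
    rewrite andbT; apply/asboolP; have := (Hh a n).2; by rewrite Hza.
  move=> [j]; rewrite mem_filter => /andP[/asboolP Hj _] Hrj.
  apply: HN; apply: (@cum_sub W n N); first exact: leq_trans (leq_maxl _ _) Hn.
  exact: Hj _ Hrj.
have [N HN] : exists N, ~ V N (f a) by apply: V2; rewrite Hza.
exists N => // n /= Hn.
rewrite /Eenum pickleK /Eq /=; apply/asboolPn => -[[j]].
rewrite mem_filter => /andP[/asboolP Hj _] Hrj _.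
apply: HN; exact: (@cum_sub V n N Hn _ (Hj _ Hrj)).
Qed.

Lemma down_b (L K : Type) : card_leq L K -> lt_bnum K -> lt_bnum L.
Proof.
move=> [h hinj] Hb F.
pose G (k : K) : nat -> nat :=
  match pselect (exists l, h l = k) with
  | left P => F (sval (cid P)) | right _ => fun _ => 0 end.
have [g Hg] := Hb G; exists g => l.
have := Hg (h l); rewrite /G.
case: (pselect _) => [P|nP]; last by exfalso; apply: nP; exists l.
by have /hinj -> := svalP (cid P).
Qed.

Lemma down_q (L K : Type) : card_leq L K -> lt_qnum K -> lt_qnum L.
Proof.
move=> [h hinj] [f [finj Qf]]; exists (f \o h); split.
  by move=> x y /finj /hinj.
move=> B HB.
have HB' : B `<=` range f by move=> x /HB [l _ <-]; exists (h l).
have [U [Uo HU]] := Qf B HB'.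
exists U; split => //; apply/seteqP; split => x.
  move=> Bx; have := Bx; rewrite {1}HU => -[_ HUx]; split => //; exact: HB.
move=> [[l _ <-] HUx]; rewrite HU; split => //; by exists (h l).
Qed.

Lemma B_dir (K : Type) : lt_bnum K /\ lt_qnum K ->
  forall L : Type, card_leq L K -> sel_seq_separable (cantor_cube L).
Proof.
move=> [Hb Hq] L HL.
have HbL := down_b HL Hb; have HqL := down_q HL Hq.
have [E HE] := seqsep HbL HqL.
exact: sss_of HbL HE.
Qed.

Lemma fin_bound (T : choiceType) (A : set T) (P : T -> nat -> Prop) :
  finite_set A -> (forall p, A p -> exists k, P p k) ->
  exists b, forall p, A p -> exists2 k, (k <= b)%N & P p k.
Proof.
move=> /finite_seqP [l ->]; elim: l => [|x l IH] H.
  by exists 0 => p /=; rewrite in_nil.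
have [b1 Hb1] : exists b, forall p, [set` l] p -> exists2 k, (k <= b)%N & P p k.
  by apply: IH => p Hp; apply: H; rewrite /= inE Hp orbT.
have [k Hk] := H x ltac:(by rewrite /= inE eqxx).
exists (maxn b1 k) => p /=; rewrite inE => /orP[/eqP ->|Hp].
  by exists k => //; exact: leq_maxr.
have [k' Hk' Pk'] := Hb1 p Hp; exists k' => //.
exact: leq_trans Hk' (leq_maxl _ _).
Qed.

Lemma avoid_list (K : Type) (s : nat -> cantor_cube K) (l : seq (cantor_cube K)) :
  (forall p, p \in l -> exists a, p a = false) ->
  s @ \oo --> ((fun _ => true) : cantor_cube K) ->
  exists N, forall i, (N <= i)%N -> s i \notin l.
Proof.
move=> Hl Hs; elim: l Hl => [|p l IH] Hl; first by exists 0 => i _; rewrite in_nil.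
have [N1 HN1] := IH (fun q Hq => Hl q ltac:(by rewrite inE Hq orbT)).
have [a Ha] := Hl p ltac:(by rewrite inE eqxx).
have [N2 _ HN2] := (ptws_cvgP _ _).1 Hs a.
exists (maxn N1 N2) => i Hi; rewrite inE negb_or; apply/andP; split.
  apply/eqP => E.
  have := HN2 i (leq_trans (leq_maxr _ _) Hi); rewrite /= E Ha //.
exact: HN1 (leq_trans (leq_maxl _ _) Hi).
Qed.

Lemma A_b (K : Type) : sel_seq_separable (cantor_cube K) -> lt_bnum K.
Proof.
move=> Hsss F.
pose G a n := \max_(j < n.+1) F a j.
have FG a n : (F a n <= G a n)%N.
  exact: (@leq_bigmax _ (fun j : 'I_n.+1 => F a j) (Ordinal (ltnSn n))).
have Gmono a n n' : (n <= n')%N -> (G a n <= G a n')%N.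
  move=> Hn; apply/bigmax_leqP => j _.
  have Hj : (j < n'.+1)%N by rewrite ltnS (leq_trans _ Hn) // -ltnS.
  exact: (@leq_bigmax _ (fun j : 'I_n'.+1 => F a j) (Ordinal Hj)).
have [Hall|Hnot] := pselect (forall n, exists b, forall a, (G a n <= b)%N).
  have [g Hg] := choice1 Hall.
  exists g => a; exists 0 => n _; exact: leq_trans (FG a n) (Hg n a).
have [v0 Hv0] : exists v0, forall b, exists a, (b < G a v0)%N.
  apply: contrapT => H1; apply: Hnot => n; apply: contrapT => H2; apply: H1.
  exists n => b; apply: contrapT => H3; apply: H2; exists b => a.
  rewrite leqNgt; apply/negP => H4; apply: H3; by exists a.
have Hunb n k : exists a, (k < G a (n + v0))%N.
  have [a Ha] := Hv0 k; exists a; apply: leq_trans Ha _; apply: Gmono; exact: leq_addl.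
pose e n k (c : cantor_cube K) : cantor_cube K := fun a => (G a (n + v0) <= k)%N && c a.
pose Ds n := [set p : cantor_cube K | exists k c, p = e n k c].
have HDs n : seq_dense (Ds n).
  move=> z'; exists (fun i => e n i z'); split; first by move=> i; exists i, z'.
  apply/ptws_cvgP => a; exists (G a (n + v0)) => // i /= Hi.
  by rewrite /e Hi.
have [Fs [HF HFd]] := Hsss Ds HDs.
have [g0 Hg0] : exists g0 : nat -> nat, forall n p, Fs n p ->
    exists2 k, (k <= g0 n)%N & exists c, p = e n k c.
  apply: (@choice1 _ _ (fun n b => forall p, Fs n p -> exists2 k, (k <= b)%N & exists c, p = e n k c)) => n.
  apply: fin_bound; first exact: (HF n).1.
  move=> p /(HF n).2 [k [c ->]]; by exists k, c.
have [s [Hs Hsz]] := HFd ((fun _ => true) : cantor_cube K).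
have [ni Hni] : exists ni : nat -> nat, forall i, Fs (ni i) (s i).
  apply: (@choice1 _ _ (fun i n => Fs n (s i))) => i.
  by have [n _ Hn] := Hs i; exists n.
have Hsi i a : s i a -> (G a (ni i + v0) <= g0 (ni i))%N.
  have [k Hk [c Hc]] := Hg0 _ _ (Hni i).
  by rewrite Hc /e => /andP[H1 _]; exact: leq_trans H1 Hk.
have Hub n : exists i, (n <= ni i)%N.
  apply: contrapT => Hn.
  have Hlt i : (ni i < n)%N.
    rewrite ltnNge; apply/negP => H; apply: Hn; by exists i.
  have Afin : finite_set (\bigcup_(m in `I_n) Fs m).
    by apply: bigcup_finite; [exact: finite_II | move=> m _; exact: (HF m).1].
  have [l Hl] := (finite_seqP _).1 Afin.
  have [N HN] : exists N, forall i, (N <= i)%N -> s i \notin l.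
    apply: avoid_list => // p Hp.
    have : [set` l] p by [].
    rewrite -Hl => -[m _ /(HF m).2 [k [c ->]]].
    have [a Ha] := Hunb m k; exists a.
    by rewrite /e leqNgt Ha.
  have := HN N (leqnn N); apply/negP; rewrite negbK.
  have : (\bigcup_(m in `I_n) Fs m) (s N) by exists (ni N) => //; exact: Hlt.
  by rewrite Hl.
have [j Hj] := choice1 Hub.
exists (fun n => g0 (ni (j n))) => a.
have [N1 _ HN1] := (ptws_cvgP _ _).1 Hsz a.
exists (\max_(i < N1) ni i).+1 => n Hn.
have HjN : (N1 <= j n)%N.
  rewrite leqNgt; apply/negP => Hlt.
  have := @leq_bigmax _ (fun i : 'I_N1 => ni i) (Ordinal Hlt); rewrite /=.
  move=> H; have := leq_ltn_trans (Hj n) (leq_ltn_trans H Hn).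
  by rewrite ltnn.
apply: leq_trans (FG a n) _; apply: leq_trans (Hsi (j n) a _).
  apply: Gmono; exact: leq_trans (Hj n) (leq_addr _ _).
by rewrite (HN1 (j n) HjN).
Qed.

Local Open Scope ring_scope.
Section Enc.
Variable RR : realType.
Definition w (n : nat) : RR := (3^-1) ^+ n.

Lemma w_ge0 n : 0 <= w n.
Proof. by rewrite /w exprn_ge0 // invr_ge0. Qed.

Lemma w_gt0 n : 0 < w n.
Proof. by rewrite /w exprn_gt0 // invr_gt0. Qed.

Lemma wS n : w n.+1 = w n / 3.
Proof. by rewrite /w exprSr. Qed.

Lemma w_decr k d : w (k + d)%N <= w k.
Proof.
elim: d => [|d IH]; first by rewrite addn0.
rewrite addnS wS; have Hw := w_ge0 (k + d)%N; lra.
Qed.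

Fixpoint P (y : nat -> bool) (n : nat) : RR :=
  match n with 0 => 0 | n'.+1 => P y n' + (if y n' then w n' else 0) end.

Lemma P_mono y a d : P y a <= P y (a + d)%N.
Proof.
elim: d => [|d IH]; first by rewrite addn0.
rewrite addnS /=; have Hw := w_ge0 (a + d)%N; case: (y (a + d)%N).
all: lra.
Qed.

Lemma P_tail y a d : P y (a + d)%N <= P y a + (3/2) * w a - (3/2) * w (a + d)%N.
Proof.
elim: d => [|d IH]; first by rewrite addn0; lra.
rewrite addnS /= wS; have Hw := w_ge0 (a + d)%N; case: (y (a + d)%N); lra.
Qed.

Lemma P_ub y n : P y n <= 3/2.
Proof.
have := P_tail y 0 n; rewrite add0n /= /w expr0 => H.
have Hw := w_ge0 n; rewrite /w in Hw; lra.
Qed.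

Definition enc (y : nat -> bool) : RR := sup (range (P y)).

Lemma enc_hs y : has_sup (range (P y)).
Proof.
split; first by exists (P y 0), 0.
by exists (3/2) => _ [n _ <-]; exact: P_ub.
Qed.

Lemma P_le_enc y n : P y n <= enc y.
Proof. by apply: sup_upper_bound; [exact: enc_hs | exists n]. Qed.

Lemma enc_le y x : (forall n, P y n <= x) -> enc y <= x.
Proof. by move=> H; apply: ge_sup; [exists (P y 0), 0 | move=> _ [n _ <-]]. Qed.

Lemma P_prefix y y' k : (forall j, (j < k)%N -> y j = y' j) -> P y k = P y' k.
Proof.
elim: k => [|k IH] H //=.
rewrite IH; last by move=> j Hj; apply: H; exact: ltnW.
by rewrite H.
Qed.

Lemma sep1 y y' k : y k = true -> y' k = false ->
  (forall j, (j < k)%N -> y j = y' j) -> enc y' + w k / 2 <= enc y.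
Proof.
move=> Hy Hy' Hpre.
have H1 : P y k.+1 <= enc y := P_le_enc y k.+1.
have H2 : enc y' <= P y' k + w k / 2.
  apply: enc_le => n.
  case: (leqP n k.+1) => Hn.
    have := P_mono y' n (k.+1 - n); rewrite subnKC //= Hy' => H.
    have Hw := w_gt0 k; lra.
  have := P_tail y' k.+1 (n - k.+1); rewrite subnKC; last exact: ltnW.
  rewrite /= Hy' wS => H; have Hw := w_ge0 n; lra.
move: H1; rewrite /= Hy (P_prefix Hpre) => H1; lra.
Qed.

Lemma sep y y' m : y m != y' m -> w m / 2 <= `|enc y - enc y'|.
Proof.
move=> Hm.
have exP : exists j, y j != y' j by exists m.
case: (ex_minnP exP) => k Hk Hmin.
have Hkm : (k <= m)%N := Hmin m Hm.
have Hpre j : (j < k)%N -> y j = y' j.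
  move=> Hj; apply/eqP; apply: contraTT Hj => Hj; rewrite -leqNgt; exact: Hmin.
have Hw : w m <= w k by rewrite -(subnKC Hkm); exact: w_decr.
move: Hk; case Hyk: (y k); case Hy'k: (y' k) => // _.
  have H := sep1 Hyk Hy'k Hpre.
  have Hw0 := w_ge0 k; rewrite ger0_norm; lra.
have Hpre' j : (j < k)%N -> y' j = y j by move=> Hj; rewrite Hpre.
have H := sep1 Hy'k Hyk Hpre'.
have Hw0 := w_ge0 k; rewrite ler0_norm; lra.
Qed.

End Enc.

Lemma seq_dense_setT (T : topologicalType) : seq_dense (@setT T).
Proof. by move=> z; exists (fun _ => z); split => //; exact: cvg_cst. Qed.

Lemma A_q (K : Type) : sel_seq_separable (cantor_cube K) -> lt_qnum K.
Proof.
move=> Hsss.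
have [Fs [HF HFd]] := Hsss (fun _ => setT) (fun _ => @seq_dense_setT (cantor_cube K)).
have [l Hl] : exists l : nat -> seq (cantor_cube K), forall n, Fs n = [set` l n].
  apply: (@choice1 _ _ (fun n l => Fs n = [set` l])) => n.
  exact: (finite_seqP _).1 (HF n).1.
pose E (t : nat) : cantor_cube K :=
  match @unpickle (nat * nat)%type t with
  | Some (n, k) => nth (fun _ => false) (l n) k | None => fun _ => false end.
have HE : forall z : cantor_cube K, exists m : nat -> nat, (fun i => E (m i)) @ \oo --> z.
  move=> z; have [s [Hs Hsz]] := HFd z.
  have [ni Hni] : exists ni : nat -> nat, forall i, s i \in l (ni i).
    apply: (@choice1 _ _ (fun i n => s i \in l n)) => i.
    have [n _ Hn] := Hs i; exists n; move: Hn; by rewrite Hl.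
  exists (fun i => pickle (ni i, index (s i) (l (ni i)))).
  suff -> : (fun i => E (pickle (ni i, index (s i) (l (ni i))))) = s by [].
  apply: funext => i; rewrite /E pickleK; exact: nth_index.
pose phi (a : K) : nat -> bool := fun t => E t a.
have Hsepa a b : a <> b -> exists t, E t a != E t b.
  move=> ab; have [m Hm] := HE (fun c => `[< c = a >]).
  have [N1 _ H1] := (ptws_cvgP _ _).1 Hm a.
  have [N2 _ H2] := (ptws_cvgP _ _).1 Hm b.
  exists (m (maxn N1 N2)).
  rewrite (H1 (maxn N1 N2) (leq_maxl _ _)) (H2 (maxn N1 N2) (leq_maxr _ _)).
  by rewrite asboolT // asboolF // => ba; apply: ab.
pose f (a : K) : R := enc R (phi a).
exists f; split.
  move=> a b Hab; apply: contrapT => ab.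
  have [t Ht] := Hsepa a b ab.
  have := @sep R (phi a) (phi b) t Ht; rewrite -/(f a) -/(f b) Hab subrr normr0.
  by rewrite leNgt divr_gt0 // w_gt0.
move=> B HB.
pose z : cantor_cube K := fun a => `[< B (f a) >].
have [m Hm] := HE z.
pose S t : set R := \bigcup_(y in [set y : nat -> bool | y t]) ball (enc R y) (w R t / 2).
exists (fun N => \bigcup_(i in [set i | (N <= i)%N]) S (m i)); split.
  move=> N; apply: bigcup_open => i _; apply: bigcup_open => y _.
exact: (@ball_open _ R^o).
apply/seteqP; split => x.
  move=> Bx; have [a _ xa] := HB x Bx; subst x.
  split; first by exists a.
  move=> N _.
  have [N0 _ HN0] := (ptws_cvgP _ _).1 Hm a.
  exists (maxn N N0); first exact: leq_maxl.
  exists (phi a).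
    rewrite /= /phi (HN0 _ (leq_maxr _ _)) /z; exact/asboolP.
  apply: ballxx; by rewrite divr_gt0 // w_gt0.
move=> [[a _ <-] HU].
apply: contrapT => nB.
have [N0 _ HN0] := (ptws_cvgP _ _).1 Hm a.
have [i Hi [y Hy Hb]] := HU N0 I.
have Hai : E (m i) a = false by rewrite HN0 // /z; exact/asboolPn.
have Hne : y (m i) != phi a (m i) by rewrite Hy /phi Hai.
have Hs := @sep R y (phi a) (m i) Hne.
move: Hb; rewrite /ball /= => Hb.
by have := lt_le_trans Hb Hs; rewrite ltxx.
Qed.

Local Close Scope ring_scope.

Theorem theorem5p2 :
  forall K : Type,
    (forall L : Type, card_leq L K -> sel_seq_separable (cantor_cube L)) <->
    (lt_bnum K /\ lt_qnum K).
Proof.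
move=> K; split; last exact: B_dir.
move=> H; have HK : sel_seq_separable (cantor_cube K).
  by apply: H; exists id.
split; [exact: A_b | exact: A_q].
Qed.
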